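(* Let $A\in\mathbb R^{n_x\times n_x}$, $B\in\mathbb R^{n_x\times n_u}$, $E\in\mathbb R^{n_x\times n_w}$, $C\in\mathbb R^{n_y\times n_x}$ define the stochastic system $X_{k+1}=AX_k+BU_k+EW_k$, $Y_k=CX_k$, with i.i.d. process disturbances $W_k\in\mathcal L^2$ of known distribution. Assume that $(A,B)$ is controllable and $(A,C)$ is observable, and let $T_{\mathrm{ini}}$ be an integer not smaller than the lag of $(A,C)$. Assume this state-space model is equivalent to the VARX model $$Y_k=\hat A\,Y_{[k-T_{\mathrm{ini}},k-1]}+\hat B\,U_{[k-T_{\mathrm{ini}},k-1]}+W_{k-1},$$ with $\hat A\in\mathbb R^{n_y\times T_{\mathrm{ini}}n_y}$, $\hat B\in\mathbb R^{n_y\times T_{\mathrm{ini}}n_u}$ and $W_k\in\mathcal L^2(\mathbb R^{n_y})$. Let $(u^{\mathrm{ud}},y^{\mathrm{ud}})_{[1-T_{\mathrm{ini}},T]}$ be recorded real input-output data of the undisturbed system, i.e. $y^{\mathrm{ud}}_k=\hat A\,y^{\mathrm{ud}}_{[k-T_{\mathrm{ini}},k-1]}+\hat B\,u^{\mathrm{ud}}_{[k-T_{\mathrm{ini}},k-1]}$ for all $k\in\mathbb I_{[1,T]}$, and let $N\in\mathbb N^+$ be such that $$\operatorname{rank}\begin{bmatrix}\mathcal H_{T_{\mathrm{ini}}+N}(u^{\mathrm{ud}}_{[1,T]})\\ \mathcal H_{T_{\mathrm{ini}}}(y^{\mathrm{ud}}_{[1,T-N]})\end{bmatrix}=(T_{\mathrm{ini}}+N)n_u+T_{\mathrm{ini}}n_y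 .$$ Then a real sequence $(u,y)_{[1-T_{\mathrm{ini}},N]}$ satisfies the undisturbed dynamics $y_k=\hat A\,y_{[k-T_{\mathrm{ini}},k-1]}+\hat B\,u_{[k-T_{\mathrm{ini}},k-1]}$ for all $k\in\mathbb I_{[1,N]}$ if and only if there exists $g\in\mathbb R^{T-N-T_{\mathrm{ini}}+1}$ such that $$\begin{bmatrix}\mathcal H_{T_{\mathrm{ini}}+N}(u^{\mathrm{ud}}_{[1,T]})\\ \mathcal H_{T_{\mathrm{ini}}+N}(y^{\mathrm{ud}}_{[1,T]})\end{bmatrix}g=\begin{bmatrix}u_{[1-T_{\mathrm{ini}},N]}\\ y_{[1-T_{\mathrm{ini}},N]}\end{bmatrix}.$$
   Context: $\mathcal L^2(\mathbb R^n)$ denotes $\mathbb R^n$-valued random variables with finite second moments on a probability space. $\mathbb I_{[a,b]}=\{a,a+1,\dots,b\}$; for a sequence $z$, $z_{[a,b]}=[z_a^\top,\dots,z_b^\top]^\top$. For a sequence $z_{[a,b]}$ with $z_k\in\mathbb R^n$ and $M\le b-a+1$, the Hankel matrix $\mathcal H_M(z_{[a,b]})$ is the $Mn\times(b-a-M+2)$ block matrix whose $(r,c)$ block is $z_{a+r+c-2}$. The lag of an observable pair $(A,C)$ is the smallest $\ell$ such that $[C^\top,(CA)^\top,\dots,(CA^{\ell-1})^\top]^\top$ has full column rank. *)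

(* Defs.v *)
From HB Require Import structures.
From mathcomp Require Import all_boot all_order all_algebra.
From mathcomp Require Import reals.
Set Implicit Arguments. Unset Strict Implicit. Unset Printing Implicit Defensive.
Import Order.TTheory GRing.Theory Num.Theory.
Local Open Scope ring_scope.

Section Defs.
Variable R : realType.

Fixpoint obsmx (nx ny : nat) (A : 'M[R]_nx) (C : 'M[R]_(ny, nx)) (l : nat)
  : 'M[R]_(l * ny, nx) :=
  match l return 'M[R]_(l * ny, nx) with
  | 0 => 0
  | l'.+1 => col_mx C (obsmx A C l' *m A)
  end.

Fixpoint ctrbmx (nx nu : nat) (A : 'M[R]_nx) (B : 'M[R]_(nx, nu)) (l : nat)
  : 'M[R]_(nx, l * nu) :=
  match l return 'M[R]_(nx, l * nu) with
  | 0 => 0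
  | l'.+1 => row_mx B (A *m ctrbmx A B l')
  end.

Definition controllable nx nu (A : 'M[R]_nx) (B : 'M[R]_(nx, nu)) : Prop :=
  \rank (ctrbmx A B nx) = nx.

Definition observable nx ny (A : 'M[R]_nx) (C : 'M[R]_(ny, nx)) : Prop :=
  \rank (obsmx A C nx) = nx.

Definition is_lag nx ny (A : 'M[R]_nx) (C : 'M[R]_(ny, nx)) (l : nat) : Prop :=
  \rank (obsmx A C l) = nx /\ (forall l', (l' < l)%N -> \rank (obsmx A C l') <> nx).

(* z_[a, a+L-1] stacked as a column vector of size L*n (block r is z_(a+r)). *)
Definition seg n (z : int -> 'cV[R]_n) (a : int) (L : nat) : 'cV[R]_(L * n) :=
  (mxvec (\matrix_(r < L, c < n) z (a + (r : nat)%:Z) c ord0))^T.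

(* Hankel matrix with M block rows and K columns built from z starting at a:
   block (r, c) (0-based) is z_(a+r+c); i.e. H_M(z_[a, a+M+K-2]). *)
Definition hankel n (z : int -> 'cV[R]_n) (a : int) (M K : nat)
  : 'M[R]_(M * n, K) :=
  \matrix_(i < M * n, c < K) seg z (a + (c : nat)%:Z) M i ord0.

Definition varx nu ny (Tini : nat) (Ah : 'M[R]_(ny, Tini * ny))
  (Bh : 'M[R]_(ny, Tini * nu)) (u : int -> 'cV[R]_nu) (y : int -> 'cV[R]_ny)
  (k : int) : Prop :=
  y k = Ah *m seg y (k - Tini%:Z) Tini + Bh *m seg u (k - Tini%:Z) Tini.

End Defs.

(* Main.v *)
Require Import Defs.
From HB Require Import structures.
From mathcomp Require Import all_boot all_order all_algebra.
From mathcomp Require Import reals zify ring.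
Import Order.TTheory GRing.Theory Num.Theory.
Local Open Scope ring_scope.

Set Implicit Arguments. Unset Strict Implicit.
Section Aux.
Variable R : realType.

Lemma segE n (z : int -> 'cV[R]_n) a L (r : 'I_L) (j : 'I_n) :
  seg z a L (mxvec_index r j) 0 = z (a + (r : nat)%:Z) j 0.
Proof. by rewrite /seg mxE mxvecE mxE. Qed.

Lemma seg_ext' n (z z' : int -> 'cV[R]_n) a L :
  (forall t, a <= t -> t < a + L%:Z -> z t = z' t) -> seg z a L = seg z' a L.
Proof.
move=> H; apply/matrixP => i k; rewrite (ord1 k).
case/mxvec_indexP: i => r j; rewrite !segE H //.
  by lia.
have := ltn_ord r; lia.
Qed.

Lemma seg_inj' n (z z' : int -> 'cV[R]_n) a L :
  seg z a L = seg z' a L -> forall t, a <= t -> t < a + L%:Z -> z t = z' t.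
Proof.
move=> E t h1 h2.
have hr : (`|t - a|%N < L)%N by lia.
have et : a + (`|t - a|%N)%:Z = t by lia.
apply/matrixP => j k; rewrite (ord1 k).
have := congr1 (fun M : 'M[R]_(L * n, 1) => M (mxvec_index (Ordinal hr) j) 0) E.
by rewrite !segE /= et.
Qed.

Definition comb n K (g : 'cV[R]_K) (z : int -> 'cV[R]_n) (s : int) : int -> 'cV[R]_n :=
  fun t => \sum_(c < K) g c 0 *: z (t + s + (c : nat)%:Z).

Lemma seg_comb n K (g : 'cV[R]_K) (z : int -> 'cV[R]_n) s a L :
  seg (comb g z s) a L = \sum_(c < K) g c 0 *: seg z (a + s + (c : nat)%:Z) L.
Proof.
apply/matrixP => i k; rewrite (ord1 k).
case/mxvec_indexP: i => r j; rewrite segE /comb !summxE.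
apply: eq_bigr => c _; rewrite !mxE mxvecE mxE.
by have -> : a + s + (c : nat)%:Z + (r : nat)%:Z = a + (r : nat)%:Z + s + (c : nat)%:Z by ring.
Qed.

Lemma hankel_mul n (z : int -> 'cV[R]_n) a L K (g : 'cV[R]_K) s :
  hankel z a L K *m g = seg (comb g z s) (a - s) L.
Proof.
rewrite seg_comb; apply/matrixP => i k; rewrite (ord1 k) !mxE summxE.
apply: eq_bigr => c _; rewrite !mxE mulrC.
by have -> : a - s + s + (c : nat)%:Z = a + (c : nat)%:Z by ring.
Qed.

Lemma varx_comb nu ny Tini (Ah : 'M[R]_(ny, Tini * ny)) (Bh : 'M[R]_(ny, Tini * nu))
  K (g : 'cV[R]_K) uud yud s k :
  (forall c : 'I_K, varx Ah Bh uud yud (k + s + (c : nat)%:Z)) ->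
  varx Ah Bh (comb g uud s) (comb g yud s) k.
Proof.
move=> H; rewrite /varx !seg_comb {1}/comb !mulmx_sumr -big_split.
apply: eq_bigr => c _; rewrite H -!scalemxAr /= -scalerDr.
by have -> : k - Tini%:Z + s + (c : nat)%:Z = k + s + (c : nat)%:Z - Tini%:Z by ring.
Qed.

End Aux.
Unset Implicit Arguments.

Theorem lemma2 (R : realType) (nx nu nw ny : nat)
  (A : 'M[R]_nx) (B : 'M[R]_(nx, nu)) (E : 'M[R]_(nx, nw)) (C : 'M[R]_(ny, nx))
  (Tini : nat)
  (Hctrb : controllable A B) (Hobs : observable A C)
  (Hlag : exists l, is_lag A C l /\ (l <= Tini)%N)
  (Ah : 'M[R]_(ny, Tini * ny)) (Bh : 'M[R]_(ny, Tini * nu))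
  (* deterministic (undisturbed) part of the equivalence SS <-> VARX *)
  (Hequiv : forall (x : int -> 'cV[R]_nx) (u : int -> 'cV[R]_nu),
      (forall k, x (k + 1) = A *m x k + B *m u k) ->
      forall k, varx Ah Bh u (fun j => C *m x j) k)
  (T N : nat) (uud : int -> 'cV[R]_nu) (yud : int -> 'cV[R]_ny)
  (HTN : (Tini + N <= T)%N)
  (Hdata : forall k : int, 1 <= k <= T%:Z -> varx Ah Bh uud yud k)
  (HN : (0 < N)%N)
  (Hrank : \rank (col_mx (hankel uud 1 (Tini + N) (T - N - Tini + 1))
                         (hankel yud 1 Tini (T - N - Tini + 1)))
           = ((Tini + N) * nu + Tini * ny)%N)
  (u : int -> 'cV[R]_nu) (y : int -> 'cV[R]_ny) :
  (forall k : int, 1 <= k <= N%:Z -> varx Ah Bh u y k) <->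
  (exists g : 'cV[R]_(T - N - Tini + 1),
      col_mx (hankel uud 1 (Tini + N) (T - N - Tini + 1))
             (hankel yud 1 (Tini + N) (T - N - Tini + 1)) *m g
      = col_mx (seg u (1 - Tini%:Z) (Tini + N)) (seg y (1 - Tini%:Z) (Tini + N))).
Proof.
have Hcol : forall (g : 'cV[R]_(T - N - Tini + 1)) k, 1 <= k <= N%:Z ->
    varx Ah Bh (comb g uud Tini%:Z) (comb g yud Tini%:Z) k.
  move=> g k /andP[hk1 hk2]; apply: varx_comb => c; apply: Hdata.
  have := ltn_ord c; move=> hc; apply/andP; split; lia.
split.
- move=> Hu.
  pose v := col_mx (seg u (1 - Tini%:Z) (Tini + N)) (seg y (1 - Tini%:Z) Tini).
  pose M := col_mx (hankel uud 1 (Tini + N) (T - N - Tini + 1))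
                   (hankel yud 1 Tini (T - N - Tini + 1)).
  have [g Hg] : exists g, M *m g = v.
    have fullT : row_full M^T by rewrite /row_full mxrank_tr Hrank.
    have sub := submx_full v^T fullT.
    exists (v^T *m pinvmx M^T)^T.
    by rewrite -[M]trmxK -trmx_mul trmxK mulmxKpV // trmxK.
  exists g; rewrite /M /v mul_col_mx in Hg; case/eq_col_mx: Hg => Hgu Hgy.
  rewrite mul_col_mx Hgu; congr col_mx.
  rewrite (hankel_mul _ _ _ _ Tini%:Z) in Hgu; rewrite (hankel_mul _ _ _ _ Tini%:Z) in Hgy; rewrite (hankel_mul _ _ _ _ Tini%:Z).
  have Hug := seg_inj' Hgu.
  have Hyg := seg_inj' Hgy.
  have claim : forall m : nat, (m <= N)%N -> forall t, 1 - Tini%:Z <= t -> t <= m%:Z ->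
      comb g yud Tini%:Z t = y t.
    elim => [|m IH] hm t ht1 ht2.
      by apply: Hyg => //; lia.
    have [ht|ht] := boolP (t <= m%:Z).
      by apply: IH => //; lia.
    have -> : t = m.+1%:Z by lia.
    rewrite (Hcol g m.+1%:Z); last by apply/andP; split; lia.
    rewrite (Hu m.+1%:Z); last by apply/andP; split; lia.
    have -> : seg (comb g yud Tini%:Z) (m.+1%:Z - Tini%:Z) Tini = seg y (m.+1%:Z - Tini%:Z) Tini.
      by apply: seg_ext' => t' h1 h2; apply: IH => //; lia.
    have -> : seg (comb g uud Tini%:Z) (m.+1%:Z - Tini%:Z) Tini = seg u (m.+1%:Z - Tini%:Z) Tini.
      by apply: seg_ext' => t' h1 h2; apply: Hug; lia.
    by [].
  by apply: seg_ext' => t h1 h2; apply: (claim N) => //; lia.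
- case=> g Hg k hk.
  rewrite mul_col_mx in Hg; case/eq_col_mx: Hg.
  rewrite !(hankel_mul _ _ _ _ Tini%:Z) => Hgu Hgy.
  have Hug := seg_inj' Hgu.
  have Hyg := seg_inj' Hgy.
  move/andP: hk => [hk1 hk2].
  have := Hcol g k (introT andP (conj hk1 hk2)); rewrite /varx.
  rewrite Hyg; [|lia|lia].
  move=> ->.
  have -> : seg y (k - Tini%:Z) Tini = seg (comb g yud Tini%:Z) (k - Tini%:Z) Tini.
    by apply: seg_ext' => t h1 h2; symmetry; apply: Hyg; lia.
  have -> : seg u (k - Tini%:Z) Tini = seg (comb g uud Tini%:Z) (k - Tini%:Z) Tini.
    by apply: seg_ext' => t h1 h2; symmetry; apply: Hug; lia.
  by [].
Qed.
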